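(* Let $m\ge2$ be an integer, let $a,b\in\mathbb{Q}_m$ and $c=a+b$. Let $\{s_n(a)\}_{n\ge0}$, $\{s_n(b)\}_{n\ge0}$, $\{s_n(c)\}_{n\ge0}$ be sequences with values in $\{0,1,\dots,m-1\}$ such that $a=\sum_{n=0}^\infty\left(\frac{m}{m+1}\right)^n s_n(a)$, $b=\sum_{n=0}^\infty\left(\frac{m}{m+1}\right)^n s_n(b)$ and $c=\sum_{n=0}^\infty\left(\frac{m}{m+1}\right)^n s_n(c)$ in $\mathbb{Q}_m$. Define $\kappa_0=0$ and, for $n\ge0$, $$\kappa_{n+1}=\kappa_n+\left\lfloor\frac{s_n(a)+s_n(b)+\kappa_n}{m}\right\rfloor.$$ Then $s_n(c)\equiv s_n(a)+s_n(b)+\kappa_n\pmod m$ for every $n\ge0$.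
   Context: $D_m$ is the set of rationals $a/b$ (with $a,b$ coprime integers) such that $\gcd(b,m)=1$; it is a subring of $\mathbb{Q}$. For $a/b\in D_m$ in lowest terms, $|a/b|_m=m^{-k}$ where $k$ is the largest integer with $m^k\mid a$, and $|0|_m=0$; the metric is $d(u,v)=|u-v|_m$. $\mathbb{Q}_m$ is the Cauchy completion of $(D_m,d)$, with ring operations extended by continuity; $D_m$ is identified with its image in $\mathbb{Q}_m$. *)

(* Defs.v *)
From HB Require Import structures.
From mathcomp Require Import all_boot all_order all_algebra.
Set Implicit Arguments. Unset Strict Implicit. Unset Printing Implicit Defensive.
Import Order.TTheory GRing.Theory Num.Theory.
Local Open Scope ring_scope.

Definition inDm (m : nat) (q : rat) : bool := coprime `|denq q|%N m.

(* m-adic valuation of the numerator: the largest k with m^k | a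
   (meaningful for m >= 2 and a <> 0). *)
Definition mval (m : nat) (q : rat) : nat :=
  \max_(k < `|numq q|%N.+1 | (m ^ k %| `|numq q|)%N) k.

Definition mnorm (m : nat) (q : rat) : rat :=
  if q == 0 then 0 else (m%:R ^- mval m q).

Definition mdist (m : nat) (u v : rat) : rat := mnorm m (u - v).

Definition mcauchy (m : nat) (x : nat -> rat) : Prop :=
  forall eps : rat, 0 < eps -> exists N : nat,
    forall i j : nat, (N <= i)%N -> (N <= j)%N -> mdist m (x i) (x j) < eps.

(* Q_m, the Cauchy completion of (D_m, d): an element is represented by a
   Cauchy sequence of elements of D_m; two representatives denote the same
   element of Q_m iff their difference tends to 0 (see Qm_eq). *)
Record Qm (m : nat) := MkQm {
  qseq : nat -> rat;
  qseq_Dm : forall n, inDm m (qseq n);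
  qseq_cauchy : mcauchy m qseq }.

Definition mnull_diff (m : nat) (x y : nat -> rat) : Prop :=
  forall eps : rat, 0 < eps -> exists N : nat,
    forall n : nat, (N <= n)%N -> mdist m (x n) (y n) < eps.

Definition Qm_eq (m : nat) (a b : Qm m) : Prop := mnull_diff m (qseq a) (qseq b).

(* c = a + b in Q_m (addition extended by continuity: the class of the
   pointwise sum of representatives) *)
Definition Qm_is_sum (m : nat) (c a b : Qm m) : Prop :=
  mnull_diff m (qseq c) (fun n => qseq a n + qseq b n).

Definition mpartial (m : nat) (s : nat -> nat) (N : nat) : rat :=
  \sum_(n < N) (m%:R / (m.+1)%:R) ^+ n * (s n)%:R.

(* the series sum_n (m/(m+1))^n s_n converges to a in Q_m:
   the sequence of partial sums (in D_m) converges to a in the completion,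
   i.e. d(partial_N, x_N) -> 0 for a representative x of a. *)
Definition mseries_to (m : nat) (s : nat -> nat) (a : Qm m) : Prop :=
  mnull_diff m (mpartial m s) (qseq a).

Fixpoint kappa (m : nat) (sa sb : nat -> nat) (n : nat) : nat :=
  match n with
  | 0 => 0
  | n'.+1 => (kappa m sa sb n' + (sa n' + sb n' + kappa m sa sb n') %/ m)%N
  end.

(* Main.v *)
Require Import Defs.
From mathcomp Require Import all_boot all_order all_algebra.
From mathcomp Require Import ring lra zify.
Set Implicit Arguments. Unset Strict Implicit. Unset Printing Implicit Defensive.
Import Order.TTheory GRing.Theory Num.Theory.
Local Open Scope ring_scope.
Definition V (m k : nat) (x : rat) : Prop :=
  exists (z : int) (d : nat), [/\ (0 < d)%N, coprime d m & x = (m ^ k)%:R * z%:~R / d%:R].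

Lemma V_add m k x y : V m k x -> V m k y -> V m k (x + y).
Proof.
move=> [z1 [d1 [d1p c1 ->]]] [z2 [d2 [d2p c2 ->]]].
exists (z1 * d2%:Z + z2 * d1%:Z), (d1 * d2)%N; split.
- by rewrite muln_gt0 d1p.
- by rewrite coprimeMl c1.
have h1 : (d1%:R : rat) != 0 by rewrite pnatr_eq0 -lt0n.
have h2 : (d2%:R : rat) != 0 by rewrite pnatr_eq0 -lt0n.
rewrite intrD !intrM natrM !pmulrn. field. by rewrite h1 h2.
Qed.

Lemma V_opp m k x : V m k x -> V m k (- x).
Proof.
move=> [z [d [dp c ->]]]; exists (- z), d; split => //.
by rewrite intrN mulrN mulNr.
Qed.

Lemma V_mono m k k' x : (k <= k')%N -> V m k' x -> V m k x.
Proof.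
move=> hk [z [d [dp c ->]]]; exists ((m ^ (k' - k))%:Z * z), d; split => //.
by rewrite intrM pmulrn mulrA -natrM -expnD subnKC.
Qed.

Lemma inDm_V0 m x : inDm m x -> V m 0 x.
Proof.
rewrite /inDm => h; exists (numq x), `|denq x|%N; split => //.
  by rewrite absz_gt0 denq_neq0.
by rewrite expn0 mul1r -[LHS]divq_num_den -[in LHS]absz_denq -pmulrn.
Qed.

Lemma V0_inDm m x : V m 0 x -> inDm m x.
Proof.
move=> [z [d [dp c ->]]]; rewrite expn0 mul1r /inDm.
set y := z%:~R / d%:R.
have hd : (d%:R : rat) != 0 by rewrite pnatr_eq0 -lt0n.
have e : numq y * d%:Z = z * denq y.
  apply/eqP; rewrite -(eqr_int rat) !intrM numqE -pmulrn /y; apply/eqP.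
  field; exact: hd.
have : (`|denq y| %| `|numq y| * d)%N.
  by rewrite -(absz_nat d) -abszM e abszM dvdn_mull.
rewrite Gauss_dvdr; last by rewrite coprime_sym coprime_num_den.
move=> hdv; exact: coprime_dvdl hdv c.
Qed.

Lemma mval_dvd m q : (m ^ mval m q %| `|numq q|)%N.
Proof.
rewrite /mval; apply: (big_ind (fun k => m ^ k %| `|numq q|)%N) => //.
by move=> i j hi hj; rewrite /maxn; case: ltnP.
Qed.

Lemma lemA m k x : (1 < m)%N -> inDm m x -> mnorm m x < m%:R ^- k -> V m k x.
Proof.
move=> hm hx; rewrite /mnorm; have [-> _ | x0] := eqVneq x 0.
  by exists 0, 1%N; split => //; rewrite ?coprime1n // mulr0 mul0r.
move=> hlt.
have m1 : 1 < (m%:R : rat) by rewrite ltr1n.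
have mp : 0 < (m%:R : rat) := lt_trans ltr01 m1.
have hk : (k < mval m x)%N.
  move: hlt; rewrite ltf_pV2 ?posrE ?exprn_gt0 //.
  by rewrite ltr_eXn2l.
have hdv : (m ^ k %| `|numq x|)%N.
  apply: dvdn_trans (mval_dvd m x); apply: dvdn_exp2l; exact: ltnW hk.
have : ((m ^ k)%:Z %| numq x)%Z by rewrite dvdzE.
case/dvdzP => z hz.
exists z, `|denq x|%N; split => //.
  by rewrite absz_gt0 denq_neq0.
rewrite -[LHS]divq_num_den -[in LHS]absz_denq -pmulrn hz intrM -pmulrn.
by rewrite (mulrC z%:~R).
Qed.

Definition Zs (m : nat) (s : nat -> nat) (N : nat) : nat :=
  (\sum_(j < N) m ^ j * m.+1 ^ (N - j) * s j)%N.

Lemma mpartial_Z m s N :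
  mpartial m s N * ((m.+1 ^ N)%:R) = (Zs m s N)%:R.
Proof.
rewrite /mpartial /Zs mulr_suml natr_sum; apply: eq_bigr => j _.
have hj : (j <= N)%N by apply: ltnW; exact: ltn_ord.
rewrite (_ : (m.+1 ^ N = m.+1 ^ j * m.+1 ^ (N - j))%N); last by rewrite -expnD subnKC.
rewrite !natrM !natrX expr_div_n.
have h1 : ((m.+1)%:R : rat) != 0 by rewrite pnatr_eq0.
have h2 : ((m.+1)%:R ^+ j : rat) != 0 by rewrite expf_neq0.
field. by rewrite h2.
Qed.

Definition udig m (sa sb : nat -> nat) n := ((sa n + sb n + kappa m sa sb n) %% m)%N.

Lemma carry m sa sb N : (0 < m)%N ->
  mpartial m sa N + mpartial m sb N =
  mpartial m (udig m sa sb) N +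
  (m ^ N)%:R * ((m.+1 * kappa m sa sb N)%:R) / ((m.+1 ^ N)%:R).
Proof.
move=> mp; elim: N => [|N IH].
  by rewrite /mpartial !big_ord0 /= !addr0 muln0 mulr0 mul0r addr0.
have e : mpartial m sa N.+1 + mpartial m sb N.+1 =
   (mpartial m sa N + mpartial m sb N) + (m%:R / (m.+1)%:R) ^+ N * (sa N)%:R
     + (m%:R / (m.+1)%:R) ^+ N * (sb N)%:R.
  by rewrite /mpartial !big_ord_recr /=; ring.
rewrite e IH /mpartial big_ord_recr /= -/(mpartial m (udig m sa sb) N).
set k := kappa m sa sb N.
have hd := divn_eq (sa N + sb N + k) m.
have hu : ((udig m sa sb N)%:R : rat) =
   (sa N)%:R + (sb N)%:R + k%:R - ((sa N + sb N + k) %/ m)%:R * m%:R.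
  rewrite /udig -/k; apply/eqP; rewrite eq_sym subr_eq -natrM -!natrD; apply/eqP.
  apply: congr1; rewrite [RHS]addnC; exact: hd.
rewrite hu !natrM !natrD !natrX expr_div_n !exprS.
have h1 : ((m.+1)%:R : rat) != 0 by rewrite pnatr_eq0.
have h2 : ((m.+1)%:R ^+ N : rat) != 0 by rewrite expf_neq0.
have h3 : (1 + m%:R : rat) != 0 by rewrite addrC natr1 pnatr_eq0.
field. by rewrite h2 h3.
Qed.

Lemma modS_pow m k s : (1 < m)%N -> ((m.+1 ^ k * s) %% m = s %% m)%N.
Proof.
by move=> hm; rewrite -modnMml -modnXm -addn1 modnDl (modn_small hm) exp1n (modn_small hm) mul1n.
Qed.

Lemma digit m sc u N n z d : (1 < m)%N ->
  (forall j, sc j < m)%N -> (forall j, u j < m)%N -> (n < N)%N ->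
  (forall j, j < n -> sc j = u j)%N -> coprime d m -> (0 < d)%N ->
  mpartial m sc N - mpartial m u N = (m ^ n.+1)%:R * z%:~R / d%:R ->
  sc n = u n.
Proof.
move=> hm hsc hu hnN hlt cd dp H.
set Zc := Zs m sc N; set Zu := Zs m u N.
have hd : (d%:R : rat) != 0 by rewrite pnatr_eq0 -lt0n.
have hr : (Zc%:R - Zu%:R) * d%:R = (m ^ n.+1)%:R * z%:~R * (m.+1 ^ N)%:R :> rat.
  by rewrite /Zc /Zu -!mpartial_Z -mulrBl H; field.
have hi : ((Zc%:Z - Zu%:Z) * d%:Z = (m ^ n.+1)%:Z * z * (m.+1 ^ N)%:Z)%R.
  apply/eqP; rewrite -(eqr_int rat) !intrM intrB -!pmulrn; exact/eqP.
have hdv : (m ^ n.+1 %| `|Zc - Zu|)%N.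
  rewrite -(@Gauss_dvdl _ _ d); last first.
    apply: (coprimeXl n.+1). rewrite coprime_sym. exact: cd.
  have := congr1 absz hi. rewrite !abszM !absz_nat => ->.
  rewrite -mulnA. exact: dvdn_mulr.
have hmod : (Zc == Zu %[mod m ^ n.+1])%N.
  case: (leqP Zu Zc) => h.
    rewrite (eqn_mod_dvd _ h). by rewrite subzn // absz_nat in hdv.
  have h' := ltnW h.
  rewrite eq_sym (eqn_mod_dvd _ h'). by rewrite -opprB subzn // abszN absz_nat in hdv.
pose f s j := (m ^ j * m.+1 ^ (N - j) * s j)%N.
have hsplit : forall s, Zs m s N =
   (\sum_(0 <= j < n) f s j + (f s n + \sum_(n.+1 <= j < N) f s j))%N.
  move=> s; rewrite /Zs -(big_mkord xpredT (fun j => f s j)).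
  by rewrite (big_cat_nat (leq0n n) (ltnW hnN)) /= (big_ltn hnN).
have eA : (\sum_(0 <= j < n) f sc j = \sum_(0 <= j < n) f u j)%N.
  by apply: eq_big_nat => j /andP[_ hj]; rewrite /f hlt.
have Rdiv : forall s, (m ^ n.+1 %| \sum_(n.+1 <= j < N) f s j)%N.
  move=> s; rewrite big_nat_cond; apply: dvdn_sum => j /andP[/andP[hj _] _].
  rewrite /f -mulnA; apply: dvdn_mulr; exact: dvdn_exp2l hj.
have m0 : (0 < m)%N by apply: ltnW.
rewrite /Zc /Zu !hsplit eA eqn_modDl -modnDmr (eqP (Rdiv sc)) in hmod.
rewrite -[X in _ == X]modnDmr (eqP (Rdiv u)) !addn0 in hmod.
rewrite /f -!mulnA expnSr -!muln_modr eqn_pmul2l ?expn_gt0 ?m0 // in hmod.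
rewrite !modS_pow // !modn_small // in hmod.
exact/eqP.
Qed.

Lemma mpartial_V0 m s N : V m 0 (mpartial m s N).
Proof.
exists (Zs m s N)%:Z, (m.+1 ^ N)%N; split.
- by rewrite expn_gt0.
- by apply: coprimeXl; exact: coprimeSn.
have h : ((m.+1 ^ N)%:R : rat) != 0 by rewrite pnatr_eq0 expn_eq0.
rewrite expn0 mul1r -pmulrn -mpartial_Z; field; exact: h.
Qed.

Unset Implicit Arguments.
Set Strict Implicit.


Theorem mainTheorem12 (m : nat) (hm : (2 <= m)%N) (a b c : Qm m)
  (hc : Qm_is_sum c a b)
  (sa sb sc : nat -> nat)
  (hsa : forall n, (sa n < m)%N) (hsb : forall n, (sb n < m)%N)
  (hsc : forall n, (sc n < m)%N)
  (ha : mseries_to sa a) (hb : mseries_to sb b) (hcs : mseries_to sc c) :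
  forall n : nat, sc n = (sa n + sb n + kappa m sa sb n)%N %[mod m].
Proof.
have m0 : (0 < m)%N by apply: ltnW.
suff key : forall n, sc n = udig m sa sb n.
  by move=> n; rewrite key /udig modn_mod.
elim/ltn_ind => n IH.
pose k := n.+1.
pose eps := (m%:R ^- k : rat).
have ep : 0 < eps by rewrite invr_gt0 exprn_gt0 // ltr0n.
have [N1 h1] := hcs eps ep.
have [N2 h2] := hc eps ep.
have [N3 h3] := ha eps ep.
have [N4 h4] := hb eps ep.
pose N := maxn (maxn N1 N2) (maxn (maxn N3 N4) k).
have hN1 : (N1 <= N)%N by rewrite /N; lia.
have hN2 : (N2 <= N)%N by rewrite /N; lia.
have hN3 : (N3 <= N)%N by rewrite /N; lia.
have hN4 : (N4 <= N)%N by rewrite /N; lia.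
have hkN : (k <= N)%N by rewrite /N; lia.
have Dq : forall x : Qm m, V m 0 (qseq x N) by move=> x; apply: inDm_V0; exact: qseq_Dm.
have v1 : V m k (mpartial m sc N - qseq c N).
  apply: lemA => //; last exact: h1.
  by apply: V0_inDm; apply: V_add; [exact: mpartial_V0 | apply: V_opp; exact: Dq].
have v2 : V m k (qseq c N - (qseq a N + qseq b N)).
  apply: lemA => //; last exact: h2.
  by apply: V0_inDm; apply: V_add; [exact: Dq | apply: V_opp; apply: V_add; exact: Dq].
have v3 : V m k (mpartial m sa N - qseq a N).
  apply: lemA => //; last exact: h3.
  by apply: V0_inDm; apply: V_add; [exact: mpartial_V0 | apply: V_opp; exact: Dq].
have v4 : V m k (mpartial m sb N - qseq b N).
  apply: lemA => //; last exact: h4.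
  by apply: V0_inDm; apply: V_add; [exact: mpartial_V0 | apply: V_opp; exact: Dq].
have v5 : V m k (mpartial m sa N + mpartial m sb N - mpartial m (udig m sa sb) N).
  apply: (V_mono hkN).
  exists (m.+1 * kappa m sa sb N)%N%:Z, (m.+1 ^ N)%N; split.
  - by rewrite expn_gt0.
  - by apply: coprimeXl; exact: coprimeSn.
  by rewrite carry // addrAC subrr add0r pmulrn.
have v : V m k (mpartial m sc N - mpartial m (udig m sa sb) N).
  have -> : mpartial m sc N - mpartial m (udig m sa sb) N =
    (mpartial m sc N - qseq c N) + (qseq c N - (qseq a N + qseq b N))
    - (mpartial m sa N - qseq a N) - (mpartial m sb N - qseq b N)
    + (mpartial m sa N + mpartial m sb N - mpartial m (udig m sa sb) N) by ring.
  apply: V_add => //; apply: V_add; last exact: V_opp.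
  by apply: V_add; last exact: V_opp; apply: V_add.
have [z [d [dp cd hzd]]] := v.
apply: (digit (z := z) (d := d) _ hsc _ _ IH cd dp hzd) => //.
by move=> j; rewrite /udig ltn_pmod.
Qed.
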